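(* For every integer $n\ge 3$, $g(n,3) \ge n/6$.
   Context: For integers $2\le k\le n$, let $S_n$ denote the set of permutations of $[n]=\{1,\dots,n\}$ (written as sequences), and $S_{n,k}$ the set of all sequences of $k$ distinct elements of $[n]$. A sequence $\kappa\in S_{n,k}$ is a subsequence of a permutation $\pi\in S_n$ if its elements appear in $\pi$ in the same relative order as in $\kappa$. A perfect sequence covering array ${\rm PSCA}(n,k)$ with multiplicity $\lambda$ (a positive integer) is a multiset $X$ of elements of $S_n$ such that every $\kappa\in S_{n,k}$ is a subsequence of exactly $\lambda$ elements of $X$ (counted with multiplicity); such an $X$ has size $\lambda k!$. $g(n,k)$ denotes the smallest $\lambda$ for which a ${\rm PSCA}(n,k)$ with multiplicity $\lambda$ exists. *)

(* Defs.v *)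
From mathcomp Require Import all_boot all_fingroup.
Set Implicit Arguments. Unset Strict Implicit. Unset Printing Implicit Defensive.

Definition perm_seq (n : nat) (p : 'S_n) : seq 'I_n := [seq p i | i <- enum 'I_n].

Definition is_subseq_of_perm (n k : nat) (kappa : k.-tuple 'I_n) (p : 'S_n) : bool :=
  subseq kappa (perm_seq p).

(* X (a multiset of permutations, represented as a list) is a PSCA(n,k) with
   multiplicity lam: lam is positive and every kappa in S_{n,k} is a
   subsequence of exactly lam elements of X, counted with multiplicity. *)
Definition is_PSCA (n k : nat) (X : seq 'S_n) (lam : nat) : Prop :=
  0 < lam /\
  forall kappa : k.-tuple 'I_n, uniq kappa ->
    count (is_subseq_of_perm kappa) X = lam.

(* Main.v *)
Require Import Defs.
From mathcomp Require Import all_boot all_fingroup all_algebra.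
From mathcomp Require Import ring zify.
From Stdlib Require Import Lia.
Set Implicit Arguments. Unset Strict Implicit. Unset Printing Implicit Defensive.
Import GRing.Theory Num.Theory.

Lemma subseq3_enum n (i j k : 'I_n) :
  subseq [:: i; j; k] (enum 'I_n) = (i < j) && (j < k).
Proof.
have srt : sorted (fun x y : 'I_n => x < y) (enum 'I_n).
  by have := iota_ltn_sorted 0 n; rewrite -val_enum_ord sorted_map.
have tr : transitive (fun x y : 'I_n => x < y) by move=> ? ? ?; apply: ltn_trans.
apply/idP/idP.
  by move=> H; have := subseq_sorted tr H srt; rewrite /= andbT.
move=> /andP[hij hjk]; apply/subseq_uniqP; first exact: enum_uniq.
apply: (irr_sorted_eq tr) => //.
- by move=> x; rewrite /= ltnn.
- by rewrite /= hij hjk.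
- exact: sorted_filter.
- by move=> x; rewrite mem_filter mem_enum andbT.
Qed.

Definition pos n (p : 'S_n) (x : 'I_n) : nat := (p^-1)%g x.

Lemma subseq3_perm n (p : 'S_n) (a b c : 'I_n) :
  subseq [:: a; b; c] (perm_seq p) = (pos p a < pos p b) && (pos p b < pos p c).
Proof.
rewrite /pos -subseq3_enum /perm_seq; apply/idP/idP.
  move=> /(map_subseq (p^-1)%g) /=.
  by rewrite -map_comp (eq_map (permK p)) map_id.
move=> /(map_subseq p) /=; by rewrite !permKV.
Qed.

Local Open Scope ring_scope.
Section PSCA.
Variables (n : nat) (X : seq 'S_n) (lam : nat).
Hypothesis HX : is_PSCA 3 X lam.

Lemma count3 (a b c : 'I_n) : a != b -> b != c -> a != c ->
  count (fun p => (pos p a < pos p b)%N && (pos p b < pos p c)%N) X = lam.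
Proof.
move=> ab bc ac; case: HX => _ /(_ [tuple a; b; c]) H.
rewrite -H /=; last by rewrite !inE negb_or ab ac bc.
by apply: eq_count => p; rewrite /is_subseq_of_perm subseq3_perm.
Qed.

Lemma sumb (s : seq 'S_n) (P : pred 'S_n) :
  \sum_(p <- s) ((P p)%:R : rat) = (count P s)%:R.
Proof.
elim: s => [|p s IH]; first by rewrite big_nil.
by rewrite big_cons IH /= natrD.
Qed.

Lemma decomp (i j k : nat) (G : bool -> bool -> bool -> rat) :
  i != j -> j != k -> i != k ->
  G (i < j)%N (j < k)%N (i < k)%N =
    ((i < j)%N && (j < k)%N)%:R * G true true true
  + ((i < k)%N && (k < j)%N)%:R * G true false true
  + ((j < i)%N && (i < k)%N)%:R * G false true true
  + ((j < k)%N && (k < i)%N)%:R * G false true false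
  + ((k < i)%N && (i < j)%N)%:R * G true false false
  + ((k < j)%N && (j < i)%N)%:R * G false false false.
Proof.
move=> ij jk ik.
case: (ltngtP i j) ij => // hij _; case: (ltngtP j k) jk => // hjk _;
  case: (ltngtP i k) ik => // hik _ /=;
  try (exfalso; lia); ring.
Qed.

Lemma sum3 (a b c : 'I_n) (G : bool -> bool -> bool -> rat) :
  a != b -> b != c -> a != c ->
  \sum_(p <- X) G (pos p a < pos p b)%N (pos p b < pos p c)%N (pos p a < pos p c)%N =
  lam%:R * (G true true true + G true false true + G false true true
          + G false true false + G true false false + G false false false).
Proof.
move=> ab bc ac.
have pne (x y : 'I_n) p : x != y -> pos p x != pos p y.
  by move=> xy; apply: contra xy => /eqP/val_inj/perm_inj ->.
rewrite (eq_bigr _ (fun p _ => decomp G (pne _ _ p ab) (pne _ _ p bc) (pne _ _ p ac))).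
rewrite !big_split /= -!mulr_suml !sumb.
have ba : b != a by rewrite eq_sym.
have cb : c != b by rewrite eq_sym.
have ca : c != a by rewrite eq_sym.
rewrite (count3 ab bc ac) (count3 ac cb ab) (count3 ba ac bc) (count3 bc ca ba)
  (count3 ca ab cb) (count3 cb ba ca); ring.
Qed.

Lemma sum1 (s : seq 'S_n) : \sum_(p <- s) (1 : rat) = (size s)%:R.
Proof.
elim: s => [|p s IH]; first by rewrite big_nil.
by rewrite big_cons IH /= -add1n natrD.
Qed.

Hypothesis hn : (3 <= n)%N.

Lemma third (x y : 'I_n) : exists c : 'I_n, (c != x) && (c != y).
Proof.
apply/existsP; apply: contraT => /existsPn H.
have : (#|'I_n| <= #|[set x; y]|)%N.
  apply: subset_leq_card; apply/subsetP => c _.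
  by move: (H c); rewrite !inE negb_and !negbK.
rewrite card_ord cards2; case: (x != y) => /=; lia.
Qed.

Variable z : 'I_n.

Definition s (x : 'I_n) (p : 'S_n) : rat :=
  if x == z then 1 else if (pos p x < pos p z)%N then 1 else -1.

Lemma sizeX : size X = (6 * lam)%N.
Proof.
have [c1 /andP[c1z _]] := third z z.
have [c2 /andP[c2z c21]] := third z c1.
have zc2 : z != c2 by rewrite eq_sym.
have c12 : c1 != c2 by rewrite eq_sym.
have := sum3 (fun _ _ _ => 1) c1z zc2 c12.
rewrite sum1 => /eqP.
have -> : (lam%:R * (1 + 1 + 1 + 1 + 1 + 1) : rat) = (6 * lam)%:R by rewrite natrM; ring.
by rewrite eqr_nat => /eqP.
Qed.

Lemma s2 x p : s x p * s x p = 1.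
Proof. by rewrite /s; case: (x == z); case: (_ < _)%N; rewrite ?mulr1 ?mulrNN ?mulr1. Qed.

Lemma sx0 x : x != z -> \sum_(p <- X) s x p = 0.
Proof.
move=> xz; have [c /andP[cx cz]] := third x z.
have zc : z != c by rewrite eq_sym.
have xc : x != c by rewrite eq_sym.
have := sum3 (fun u _ _ => if u then 1 else -1) xz zc xc.
rewrite /s (negbTE xz) /= => ->; ring.
Qed.

Lemma sxy x y : x != z -> y != z -> x != y ->
  \sum_(p <- X) s x p * s y p = 2 * lam%:R.
Proof.
move=> xz yz xy.
have := sum3 (fun _ v w => (if w then 1 else -1) * (if v then 1 else -1)) xy yz xz.
rewrite /s (negbTE xz) (negbTE yz) /= => ->; ring.
Qed.



Lemma sumss x : \sum_(p <- X) s x p * s x p = (6 * lam)%:R.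
Proof. by rewrite (eq_bigr _ (fun p _ => s2 x p)) sum1 sizeX. Qed.

Lemma gz x : \sum_(p <- X) s x p * s z p = if x == z then (6 * lam)%:R else 0.
Proof.
case: eqP => [->|/eqP xz]; first exact: sumss.
by rewrite -[RHS](sx0 xz); apply: eq_bigr => p _; rewrite {2}/s eqxx mulr1.
Qed.

Lemma gy x y : y != z ->
  \sum_(p <- X) s x p * s y p = 4 * lam%:R * (x == y)%:R + 2 * lam%:R * (x != z)%:R.
Proof.
move=> yz; case: (eqVneq x y) => [->|xy].
  by rewrite sumss yz natrM /=; ring.
case: (eqVneq x z) => [->|xz].
  rewrite (eq_bigr (s y)) ?sx0 //=; first ring.
  by move=> p _; rewrite {1}/s eqxx mul1r.
by rewrite sxy //=; ring.
Qed.

Definition A : 'M[rat]_(n, size X) := \matrix_(x, j) s x (nth 1%g X j).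

Lemma gram x y : (A *m A^T) x y = \sum_(p <- X) s x p * s y p.
Proof.
rewrite !mxE [RHS](big_nth 1%g) big_mkord; apply: eq_bigr => j _; by rewrite !mxE.
Qed.

Lemma rowfreeA : row_free A.
Proof.
apply: inj_row_free => v vA.
have lam0 : (lam%:R : rat) != 0 by case: HX => h _; rewrite pnatr_eq0 -lt0n.
have vG y : \sum_x v 0 x * (\sum_(p <- X) s x p * s y p) = 0.
  have : (v *m (A *m A^T)) 0 y = 0 by rewrite mulmxA vA mul0mx mxE.
  rewrite mxE => H; rewrite -[RHS]H; apply: eq_bigr => x _; by rewrite gram.
have vz : v 0 z = 0.
  have := vG z; under eq_bigr => x _ do rewrite gz.
  rewrite (bigD1 z) //= eqxx big1 => [|x /negbTE ->]; last by rewrite mulr0.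
  rewrite addr0 => /eqP; rewrite mulf_eq0 => /orP[/eqP //|].
  by rewrite natrM mulf_eq0 (negbTE lam0) orbF pnatr_eq0.
set S := \sum_(x | x != z) v 0 x.
have vy y : y != z -> 2 * v 0 y = - S.
  move=> yz; have := vG y; under eq_bigr => x _ do rewrite (gy _ yz).
  have -> : \sum_x v 0 x * (4 * lam%:R * (x == y)%:R + 2 * lam%:R * (x != z)%:R)
      = 4 * lam%:R * v 0 y + 2 * lam%:R * S.
    under eq_bigr => x _ do rewrite mulrDr.
    rewrite big_split /= (bigD1 y) //= big1 => [|x /negbTE xy]; last first.
      by rewrite xy mulr0 mulr0.
    rewrite eqxx addr0 /S [in RHS]big_mkcond mulr_sumr; congr (_ + _); first by rewrite mulr1 mulrC.
    apply: eq_bigr => x _.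
    by case: (x != z); rewrite ?mulr1 ?mulr0 // mulrC.
  move=> H; have /eqP : (2 * lam%:R) * (2 * v 0 y + S) = 0 by rewrite -H; ring.
  by rewrite mulf_eq0 mulf_eq0 (negbTE lam0) orbF pnatr_eq0 /= addr_eq0 => /eqP.
have S0 : S = 0.
  have : \sum_(x | x != z) 2 * v 0 x = \sum_(x | x != z) (- S).
    by apply: eq_bigr => x xz; exact: vy.
  rewrite -mulr_sumr -/S sumr_const.
  have -> : #|(fun i : 'I_n => i != z)| = n.-1.
    by rewrite -[in RHS](card_ord n) -(cardC1 z); apply: eq_card.
  rewrite -mulr_natr => H.
  have /eqP : ((n.-1)%:R + 2) * S = 0 by rewrite mulrDl [2 * S]H; ring.
  rewrite mulf_eq0 => /orP[|/eqP //].
  by rewrite -natrD pnatr_eq0 addn2.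
apply/rowP => y; rewrite mxE.
case: (eqVneq y z) => [->//|yz].
have := vy y yz; rewrite S0 oppr0 => /eqP; rewrite mulf_eq0 => /orP[//|/eqP //].
Qed.

End PSCA.

Local Close Scope ring_scope.

Theorem lemma3p1 (n : nat) (hn : 3 <= n) (X : seq 'S_n) (lam : nat) :
  is_PSCA 3 X lam -> n <= 6 * lam.
Proof.
move=> HX.
have n0 : 0 < n by apply: leq_trans hn.
have := rowfreeA HX hn (Ordinal n0).
rewrite /row_free => /eqP <-.
rewrite -(sizeX HX hn (Ordinal n0)); exact: rank_leq_col.
Qed.
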